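(* Let $\mathcal F$ be a family of subsets of an ordinal $\theta$, and suppose there is an ordinal $\alpha\le\theta$ that cannot be written as a countable union of sets orthogonal to $\mathcal F$. Let $\alpha$ be the least such ordinal. Then $\alpha$ has uncountable cofinality.
   Context: A set $B$ is orthogonal to $\mathcal F$ if $B\cap x$ is finite for every $x\in\mathcal F$. An ordinal $\alpha$ is identified with the set of smaller ordinals. *)

(* Defs.v *)
From HB Require Import structures.
From mathcomp Require Import all_boot all_order.
From mathcomp Require Import boolp classical_sets cardinality.
Set Implicit Arguments. Unset Strict Implicit. Unset Printing Implicit Defensive.
Import Order.TTheory.
Local Open Scope classical_set_scope.
Local Open Scope order_scope.

(* The ordinal theta is modelled (up to order isomorphism) by a well-ordered
   type T: a totally ordered type whose strict order is well founded. *)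
Definition well_ordered (d : Order.disp_t) (T : orderType d) : Prop :=
  well_founded (fun x y : T => x < y).

(* Ordinals alpha <= theta, viewed as initial segments of theta:
   Some x stands for the ordinal x = {y | y < x}, None stands for theta itself. *)
Definition seg (d : Order.disp_t) (T : orderType d) (a : option T) : set T :=
  match a with
  | Some x => [set y | y < x]
  | None => setT
  end.

Definition orthogonal (T : Type) (F : set (set T)) (B : set T) : Prop :=
  forall x, F x -> finite_set (B `&` x).

(* A is a countable union of sets orthogonal to F (finite unions are included,
   by padding with the empty set, which is orthogonal to every F). *)
Definition countable_orth_union (T : Type) (F : set (set T)) (A : set T) : Prop :=
  exists B : nat -> set T, (forall n, orthogonal F (B n)) /\ A = \bigcup_n B n.

Definition cofinal_in (d : Order.disp_t) (T : orderType d) (A C : set T) : Prop :=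
  C `<=` A /\ forall b, A b -> exists2 c, C c & b <= c.

(* A has uncountable cofinality: no countable subset is cofinal in A
   (this excludes 0 and successor ordinals, whose cofinality is 0 resp. 1). *)
Definition uncountable_cofinality (d : Order.disp_t) (T : orderType d) (A : set T) : Prop :=
  forall C : set T, countable C -> ~ cofinal_in A C.

(* Main.v *)
Require Import Defs.
From HB Require Import structures.
From mathcomp Require Import all_boot all_order.
From mathcomp Require Import boolp classical_sets cardinality.
Local Open Scope classical_set_scope.
Import Order.TTheory.

Theorem proposition2p1 (d : Order.disp_t) (T : orderType d)
    (wo : well_ordered T) (F : set (set T)) (a : option T) :
  ~ countable_orth_union F (seg a) ->
  (forall b : option T, seg b `<` seg a -> countable_orth_union F (seg b)) ->
  uncountable_cofinality (seg a).
Proof.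
move=> Hna Hsmall C /countable_injP [f finj] [CA Ccof].
have segtr : forall c y, seg a c -> (y < c)%O -> seg a y.
  move=> c y; case: a {Hna Hsmall CA Ccof} => [x|] //= cx yc.
  exact: lt_trans yc cx.
have Hex : forall c, exists B : nat -> set T,
    seg a c -> (forall n, orthogonal F (B n)) /\ seg (Some c) = \bigcup_n B n.
  move=> c; case: (pselect (seg a c)) => sc; last by exists (fun _ => set0).
  have : seg (Some c) `<` seg a.
    split; first by move=> y /= yc; exact: segtr yc.
    by move=> /(_ c sc) /=; rewrite ltxx.
  by move=> /Hsmall [B [HB1 HB2]]; exists B.
have [G HG] := choice Hex.
pose H (m : nat) : set T := match (unpickle m : option (nat * nat)) with
  | Some (k, n) => [set y | exists c, C c /\ f c = k /\ (G c n y \/ y = c)]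
  | None => set0 end.
apply: Hna; exists H; split.
  move=> m x Fx; rewrite /H; case: (unpickle m) => [[k n]|]; last first.
    by rewrite set0I; exact: finite_set0.
  case: (pselect (exists c, C c /\ f c = k)) => [[c0 [Cc0 fc0]]|nex]; last first.
    apply: (sub_finite_set (B := set0)); last exact: finite_set0.
    by move=> y [[c [Cc [fc _]]] _]; apply: nex; exists c.
  apply: (sub_finite_set (B := (G c0 n `&` x) `|` [set c0])).
    move=> y [[c [Cc [fc Hy]]] xy].
    have cc0 : c = c0 by apply: finj; rewrite ?inE //; rewrite fc fc0.
    subst c; case: Hy => [Gy|->]; [by left|by right].
  rewrite finite_setU; split; last exact: finite_set1.
  have [HG1 _] := HG c0 (CA _ Cc0).
  exact: HG1.
apply/seteqP; split.
  move=> y sy; have [c Cc yc] := Ccof y sy.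
  have [HG1 HG2] := HG c (CA _ Cc).
  case: (eqVneq y c) => [->|ync].
    exists (pickle (f c, 0%N)) => //; rewrite /H pickleK /=.
    by exists c; split => //; split => //; right.
  have : seg (Some c) y by rewrite /= lt_neqAle ync yc.
  rewrite HG2 => -[n _ Gy].
  exists (pickle (f c, n)) => //; rewrite /H pickleK /=.
  by exists c; split => //; split => //; left.
move=> y [m _]; rewrite /H; case: (unpickle m) => [[k n]|] //.
move=> [c [Cc [_ [Gy|->]]]]; last exact: CA.
have [_ HG2] := HG c (CA _ Cc).
have : seg (Some c) y by rewrite HG2; exists n.
by move=> /= yc; exact: segtr (CA _ Cc) yc.
Qed.
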